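(* Let $\mathcal F\subseteq 2^{[n]}$ be a non-empty simply rooted family of sets such that $\emptyset\notin\mathcal F$. For $k\ge 1$ let $c_k$ be the number of sets $A\in\mathcal F$ with $|A|=k$ such that $[i,A]\subseteq\mathcal F$ for every $i\in A$, and let $c_0=1$. Then the Euler characteristic of $X(\mathcal F)$ equals $$1-\sum_{k=0}^n(-1)^k c_k.$$
   Context: $[n]=\{1,\dots,n\}$, $2^{[n]}$ its power set, $[A,B]=\{C\in 2^{[n]}: A\subseteq C\subseteq B\}$, $[i,A]=[\{i\},A]$. A family $\mathcal F\subseteq 2^{[n]}$ is simply rooted if for every non-empty $A\in\mathcal F$ there is $i\in A$ with $[i,A]\subseteq\mathcal F$. The set of cubes of $\mathcal F$ is $\mathcal C(\mathcal F)=\{[A,B]: A\subseteq B,\ [A,B]\subseteq\mathcal F\}$. For $A\subseteq B$, $|[A,B]|=I_1\times\dots\times I_n\subseteq\mathbb R^n$ with $I_i=\{1\}$ if $i\in A$, $I_i=[0,1]$ if $i\in B\setminus A$, $I_i=\{0\}$ if $i\notin B$. The geometric realization of $\mathcal F$ is the cubical set $X(\mathcal F)=\bigcup_{[A,B]\in\mathcal C(\mathcal F)}|[A,B]|$. The Euler characteristic is that of the cubical homology of $X(\mathcal F)$ (alternating sum of ranks of its cubical homology groups). *)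

(* Defs.v *)
From mathcomp Require Import all_boot all_order all_algebra.
Set Implicit Arguments. Unset Strict Implicit. Unset Printing Implicit Defensive.
Import GRing.Theory Num.Theory.
Local Open Scope ring_scope.

Section Cubical.
Variable n : nat.
Notation sset := {set 'I_n}.

Definition interval (A B : sset) : {set sset} :=
  [set C : sset | (A \subset C) && (C \subset B)].

Definition simply_rooted (F : {set sset}) : Prop :=
  forall A, A \in F -> A != set0 -> exists2 i, i \in A & interval [set i] A \subset F.

(* Cubes [A,B] of C(F) of dimension k = |B \ A| (these are exactly the
   elementary cubes of the cubical set X(F)). *)
Definition cubes (F : {set sset}) (k : nat) : {set sset * sset} :=
  [set Q : sset * sset | [&& Q.1 \subset Q.2, interval Q.1 Q.2 \subset F & #|Q.2 :\: Q.1| == k]].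

(* Coefficient of elementary cube P in the cubical boundary of Q:
   for each free coordinate j (the m-th free one, m counted from 0) we get
   (-1)^m ( upper face (x_j = 1, i.e. j added to A) - lower face (x_j = 0,
   i.e. j removed from B) ). *)
Definition bd (Q P : sset * sset) : rat :=
  \sum_(j in Q.2 :\: Q.1)
     (-1) ^+ #|[set i in Q.2 :\: Q.1 | (i < j)%N]| *
     ((P == (j |: Q.1, Q.2))%:R - (P == (Q.1, Q.2 :\ j))%:R).

Definition bdmx (F : {set sset}) (k : nat) : 'M[rat]_(#|cubes F k.+1|, #|cubes F k|) :=
  \matrix_(i, j) bd (enum_val i) (enum_val j).

Definition bdrank (F : {set sset}) (k : nat) : nat :=
  if k is k'.+1 then \rank (bdmx F k') else 0%N.

Definition betti (F : {set sset}) (k : nat) : int :=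
  (#|cubes F k|%:Z - (bdrank F k)%:Z - (bdrank F k.+1)%:Z).

(* cubes have dimension <= n, so the sum is complete *)
Definition euler_char (F : {set sset}) : int :=
  \sum_(k < n.+1) (-1) ^+ k * betti F k.

Definition ck (F : {set sset}) (k : nat) : nat :=
  if k == 0%N then 1%N
  else #|[set A : sset in F | (#|A| == k) && [forall i in A, interval [set i] A \subset F]]|.

End Cubical.

(* Main.v *)
Require Import Defs.
From mathcomp Require Import all_boot all_order all_algebra.
From mathcomp Require Import ring.
Import GRing.Theory Num.Theory.
Local Open Scope ring_scope.

Lemma tele (r : nat -> int) m :
  \sum_(k < m) (-1) ^+ k * (r k + r k.+1) = r 0%N - (-1) ^+ m * r m.
Proof.
elim: m => [|m IH]; first by rewrite big_ord0 expr0 mul1r subrr.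
rewrite big_ord_recr /= IH exprS; ring.
Qed.

Lemma sign_sq (a : nat) : ((-1) ^+ a * (-1) ^+ a : int) = 1.
Proof. by rewrite -exprMn mulrNN mulr1 expr1n. Qed.

Lemma part_sum (T : finType) (N : nat) (p : pred T) (d : T -> nat)
  (w : nat -> int) (S : nat -> {set T}) :
  (forall k x, (x \in S k) = p x && (d x == k)) ->
  (forall x, p x -> (d x < N)%N) ->
  \sum_(k < N) w k * #|S k|%:Z = \sum_(x | p x) w (d x).
Proof.
move=> HS Hd.
transitivity (\sum_(k < N) \sum_(x | p x && (d x == k)) w k).
  apply: eq_bigr => k _.
  rewrite big_mkcond /=.
  rewrite -(big_mkcond (fun x => p x && (d x == k))) /=.
  rewrite (eq_bigl (fun x => x \in S k)); last by move=> x; rewrite HS.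
  by rewrite sumr_const -natz mulr_natr.
rewrite (exchange_big_dep p) /=; last by move=> k x _ /andP[].
apply: eq_bigr => x px.
rewrite (big_pred1 (Ordinal (Hd x px))) //.
move=> k /=; by rewrite px /= -val_eqE /= eq_sym.
Qed.

Section Main.
End Main.

Lemma cubes_big (n : nat) (F : {set {set 'I_n}}) : #|cubes F n.+1| = 0%N.
Proof.
apply/eqP; rewrite cards_eq0; apply/eqP/setP => Q; rewrite !inE.
apply/negbTE; rewrite !negb_and; apply/orP; right; apply/orP; right.
apply/negP => /eqP H.
have := max_card (mem (Q.2 :\: Q.1)); rewrite H card_ord ltnn //.
Qed.

Lemma euler_cubes (n : nat) (F : {set {set 'I_n}}) :
  euler_char F = \sum_(k < n.+1) (-1) ^+ k * #|cubes F k|%:Z.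
Proof.
rewrite /euler_char /betti.
have -> : \sum_(k < n.+1) (-1) ^+ k * ((#|cubes F k|)%:Z - (bdrank F k)%:Z - (bdrank F k.+1)%:Z)
  = \sum_(k < n.+1) (-1) ^+ k * #|cubes F k|%:Z
    - \sum_(k < n.+1) (-1) ^+ k * ((bdrank F k)%:Z + (bdrank F k.+1)%:Z).
  by rewrite -sumrB; apply: eq_bigr => k _; ring.
rewrite (tele (fun k => (bdrank F k)%:Z)) /=.
have -> : \rank (bdmx F n) = 0%N.
  apply/eqP; rewrite -leqn0.
  by apply: leq_trans (rank_leq_row (bdmx F n)) _; rewrite cubes_big.
rewrite mulr0; ring.
Qed.

Set Implicit Arguments.

Definition Pr n (F : {set {set 'I_n}}) (B : {set 'I_n}) : bool :=
  [forall i in B, Defs.interval [set i] B \subset F].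
Definition Ssum n (F : {set {set 'I_n}}) (B : {set 'I_n}) : int :=
  \sum_(A : {set 'I_n} | (A \subset B) && (Defs.interval A B \subset F)) (-1) ^+ #|A|.

Lemma split_sub n (B : {set 'I_n}) i (f : {set 'I_n} -> int) : i \in B ->
  \sum_(A : {set 'I_n} | A \subset B) f A = \sum_(A : {set 'I_n} | A \subset B :\ i) (f A + f (i |: A)).
Proof.
move=> iB.
rewrite big_split /= (bigID (fun A : {set 'I_n} => i \in A)) /= addrC.
congr (_ + _).
  by apply: eq_bigl => A; rewrite subsetD1.
rewrite (reindex_onto (fun A : {set 'I_n} => i |: A) (fun A : {set 'I_n} => A :\ i)) /=; last first.
  by move=> A /andP[_ iA]; exact: setD1K.
apply: eq_bigl => A.
rewrite subsetD1 setU11 andbT.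
case iA: (i \in A) => /=.
  rewrite andbF; apply/negbTE/andP => -[_ /eqP h].
  have : i \in (i |: A) :\ i by rewrite h.
  by rewrite !inE eqxx.
rewrite setU1K; last by rewrite iA.
by rewrite eqxx !andbT subUset sub1set iB.
Qed.

Lemma sum_sign n (B : {set 'I_n}) :
  \sum_(A : {set 'I_n} | A \subset B) (-1) ^+ #|A| = (B == set0)%:R :> int.
Proof.
have [->|/set0Pn [i iB]] := eqVneq B set0.
  rewrite (big_pred1 set0); first by rewrite cards0 expr0.
  by move=> A; rewrite subset0.
rewrite (@split_sub _ _ i _ iB) big1 // => A.
rewrite subsetD1 => /andP[_ iA].
by rewrite cardsU1 iA exprD expr1 mulN1r addrN.
Qed.

Lemma interval_restr n (F : {set {set 'I_n}}) B i A :
  Defs.interval [set i] B \subset F ->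
  (Defs.interval A B \subset F) = (Defs.interval A (B :\ i) \subset F).
Proof.
move=> hi; apply/idP/idP => h; apply/subsetP => C; rewrite inE => /andP[h1 h2].
  apply: (subsetP h); rewrite inE h1 /=.
  exact: (subset_trans h2 (subD1set B i)).
case iC: (i \in C).
  by apply: (subsetP hi); rewrite inE sub1set iC h2.
by apply: (subsetP h); rewrite inE h1 subsetD1 h2 iC.
Qed.

Lemma in_interval n (A B : {set 'I_n}) : A \subset B -> B \in Defs.interval A B.
Proof. by move=> h; rewrite inE h subxx. Qed.

Lemma notF n (F : {set {set 'I_n}}) B : B \notin F ->
  Ssum F B = - ((B != set0) && Pr F B)%:R.
Proof.
move=> BF.
rewrite /Ssum big1; last first.
  move=> A /andP[h1 h2]; exfalso; move/negP: BF; apply.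
  exact: (subsetP h2 _ (in_interval h1)).
have [->|/set0Pn [j jB]] := eqVneq B set0; first by rewrite /= oppr0.
have -> : Pr F B = false.
  apply/negbTE/forallP => /(_ j); rewrite jB /= => h.
  move/negP: BF; apply; by apply: (subsetP h); rewrite inE sub1set jB subxx.
by rewrite andbF oppr0.
Qed.

Lemma key n (F : {set {set 'I_n}}) : set0 \notin F -> simply_rooted F ->
  forall m (B : {set 'I_n}), #|B| = m -> Ssum F B = - ((B != set0) && Pr F B)%:R.
Proof.
move=> h0 hsr; elim=> [|m IH] B hB.
  move/eqP: hB; rewrite cards_eq0 => /eqP ->.
  exact: notF.
case BF: (B \in F); last by apply: notF; rewrite BF.
have Bn0 : B != set0 by rewrite -card_gt0 hB.
have [i iB hi] := hsr B BF Bn0.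
rewrite /Ssum big_mkcondr /= (@split_sub _ _ i _ iB).
transitivity (\sum_(A : {set 'I_n} | A \subset B :\ i)
   ((if Defs.interval A (B :\ i) \subset F then (-1) ^+ #|A| else 0 : int) - (-1) ^+ #|A|)).
  apply: eq_bigr => A; rewrite subsetD1 => /andP[_ iA].
  rewrite -(interval_restr A hi).
  have -> : Defs.interval (i |: A) B \subset F.
    apply/subsetP => C; rewrite inE => /andP[h1 h2].
    apply: (subsetP hi); rewrite inE sub1set h2 andbT.
    by apply: (subsetP h1); rewrite setU11.
  by rewrite /= cardsU1 iA exprD expr1 mulN1r.
rewrite sumrB -big_mkcondr sum_sign.
have hc : #|B :\ i| = m by move: (cardsD1 i B); rewrite iB hB add1n => -[].
have := IH (B :\ i) hc; rewrite /Ssum => ->.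
rewrite Bn0 /=.
have [hE|hE] := eqVneq (B :\ i) set0.
  have -> : Pr F B.
    apply/forallP => j; apply/implyP => jB.
    have [ji|ne] := eqVneq j i; first by rewrite ji.
    have : j \in B :\ i by rewrite !inE ne jB.
    by rewrite hE inE.
  by rewrite /= oppr0 sub0r.
have -> : Pr F B = Pr F (B :\ i).
  apply/forallP/forallP => h j; apply/implyP => jB.
    have := h j; rewrite (subsetP (subD1set B i) j jB) /=.
    by rewrite (interval_restr _ hi).
  have [->|ne] := eqVneq j i; first exact: hi.
  have jB' : j \in B :\ i by rewrite !inE ne jB.
  by have := h j; rewrite jB' /= -(interval_restr _ hi).
by rewrite subr0.
Qed.

Lemma sign_diff n (A B : {set 'I_n}) : A \subset B ->
  ((-1) ^+ #|B :\: A| : int) = (-1) ^+ #|B| * (-1) ^+ #|A|.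
Proof.
move=> h.
have hc : #|B| = (#|B :\: A| + #|A|)%N.
  by rewrite cardsD (setIidPr h) subnK // subset_leq_card.
by rewrite hc exprD -mulrA sign_sq mulr1.
Qed.

Theorem corollary2 (n : nat) (F : {set {set 'I_n}}) :
  F != set0 -> set0 \notin F -> simply_rooted F ->
  euler_char F = 1 - \sum_(k < n.+1) (-1) ^+ k * (ck F k)%:Z.
Proof.
move=> _ h0 hsr.
rewrite euler_cubes.
rewrite (@part_sum _ n.+1
   (fun Q : {set 'I_n} * {set 'I_n} => (Q.1 \subset Q.2) && (Defs.interval Q.1 Q.2 \subset F))
   (fun Q => #|Q.2 :\: Q.1|) (fun k => (-1) ^+ k) (cubes F)); last first.
- by move=> Q _; rewrite ltnS; apply: leq_trans (max_card _) _; rewrite card_ord.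
- by move=> k Q; rewrite inE andbA.
rewrite big_mkcond.
rewrite -(pair_bigA _ (fun A B : {set 'I_n} =>
   if (A \subset B) && (Defs.interval A B \subset F) then (-1) ^+ #|B :\: A| else 0 : int)) /=.
rewrite exchange_big /=.
transitivity (\sum_(B : {set 'I_n}) - ((-1) ^+ #|B| * ((B != set0) && Pr F B)%:R) : int).
  apply: eq_bigr => B _.
  rewrite -big_mkcond /=.
  rewrite -mulrN -(key h0 hsr (erefl #|B|)) /Ssum big_distrr /=.
  by apply: eq_bigr => A /andP[h _]; rewrite sign_diff.
rewrite big_ord_recl expr0 mul1r.
have -> : \sum_(i < n) (-1) ^+ (lift ord0 i) * (ck F (lift ord0 i))%:Z =
  \sum_(i < n) (fun k => (-1) ^+ k.+1) i *
     #|(fun k => [set A in F | (#|A| == k.+1) && Pr F A]) i|%:Z.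
  by apply: eq_bigr => i _; rewrite lift0.
have -> : ck F ord0 = 1%N by [].
rewrite (@part_sum _ n (fun B : {set 'I_n} => [&& B \in F, Pr F B & 0 < #|B|]%N)
   (fun B => #|B|.-1) (fun k => (-1) ^+ k.+1)
   (fun k => [set A in F | (#|A| == k.+1) && Pr F A])); last first.
- move=> B /and3P[_ _ h]; rewrite -ltnS prednK //.
  by apply: leq_trans (max_card _) _; rewrite card_ord.
- move=> k B; rewrite inE.
  by case: (B \in F); case: (Pr F B); case: #|B| => [|c] //=; rewrite ?andbT ?andbF ?eqSS.
rewrite sumrN opprD addrA subrr sub0r.
congr (- _).
rewrite [RHS]big_mkcond /=.
apply: eq_bigr => B _.
have [->|Bn0] := eqVneq B set0.
  by rewrite cards0 /= mulr0 !andbF.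
have cB : (0 < #|B|)%N by rewrite card_gt0.
rewrite cB andbT /= prednK //.
case PB: (Pr F B); last by rewrite andbF mulr0.
have -> : B \in F.
  case/set0Pn: Bn0 => j jB.
  move/forallP: PB => /(_ j); rewrite jB /= => h.
  by apply: (subsetP h); rewrite inE sub1set jB subxx.
by rewrite mulr1.
Qed.
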